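(* Fix $M\in\mathbb{N}^+$ and consider relative value iteration on the truncated MDP $\Lambda^M$: let $V_0(s)=0$ for all $s\in\{1,\dots,M\}$ and, for $v\ge0$ and $s\in\{1,\dots,M\}$, $$V_{v+1}(s)=\min_{a\in\mathcal{A}}\Big[u(s,a)+Q_aV_v(1)+(1-Q_a)V_v(\min\{s+1,M\})-V_v(1)\Big],$$ and let $\phi^{(v)}(s)$ be any minimizer $a$ of the bracket $u(s,a)+Q_aV_v(1)+(1-Q_a)V_v(\min\{s+1,M\})$ over $a\in\mathcal{A}$. Then for every $v\ge0$ and all states $1\le s_1<s_2\le M$, $Q_{\phi^{(v)}(s_1)}\le Q_{\phi^{(v)}(s_2)}$.
   Context: Fix $N\in\mathbb{N}^+$ vehicle types $\mathcal{N}=\{1,\dots,N\}$ with arrival probabilities $p_n\in(0,1]$, mean operational costs $c_n\ge0$ and mean sensing capabilities $r_n\in(0,1]$. Fix $\beta\in(0,1)$, $\epsilon>0$. Actions: $\mathcal{A}=2^{\mathcal{N}}$. Success probability $Q_\emptyset=0$, $Q_a=1-\prod_{n\in a}(1-r_np_n)$; expected recruitment cost $E_a=\sum_{n\in a}p_nc_n$. Immediate cost at state $\delta\in\mathbb{N}^+$: $u(\delta,a)=(1-\beta)E_a-\beta\epsilon\big(Q_a(\delta^2+2\delta)-(1+\delta)^2\big)$. The truncated MDP $\Lambda^M$ has state space $\{1,\dots,M\}$, action space $\mathcal{A}$, immediate cost $u$, and transitions: from state $s$ under action $a$, go to state $1$ with probability $Q_a$ and to state $\min\{s+1,M\}$ with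 probability $1-Q_a$. *)

(* Defs.v *)
From HB Require Import structures.
From mathcomp Require Import all_boot all_order all_algebra.
Set Implicit Arguments. Unset Strict Implicit. Unset Printing Implicit Defensive.
Import Order.TTheory GRing.Theory Num.Theory.
Local Open Scope ring_scope.

Section MDP.
Variables (R : realFieldType) (N : nat).
Variables (p c r : 'I_N -> R) (beta eps : R).

(* actions: subsets of the vehicle types {1..N}, encoded as 'I_N *)
Definition Qa (a : {set 'I_N}) : R := 1 - \prod_(n in a) (1 - r n * p n).
Definition Ea (a : {set 'I_N}) : R := \sum_(n in a) p n * c n.

Definition ucost (d : nat) (a : {set 'I_N}) : R :=
  (1 - beta) * Ea a
  - beta * eps * (Qa a * ((d%:R) ^+ 2 + 2 * d%:R) - (1 + d%:R) ^+ 2).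

Definition bracket (M : nat) (V : nat -> R) (s : nat) (a : {set 'I_N}) : R :=
  ucost s a + Qa a * V 1%N + (1 - Qa a) * V (minn s.+1 M).

Definition minbracket (M : nat) (V : nat -> R) (s : nat) : R :=
  \big[Order.min/bracket M V s set0]_(a : {set 'I_N}) bracket M V s a.

Fixpoint RVI (M : nat) (v : nat) : nat -> R :=
  match v with
  | O => fun _ => 0
  | v'.+1 => fun s => minbracket M (RVI M v') s - RVI M v' 1%N
  end.

Definition is_minimizer (M v s : nat) (a : {set 'I_N}) : Prop :=
  forall b : {set 'I_N}, bracket M (RVI M v) s a <= bracket M (RVI M v) s b.

End MDP.

(* Main.v *)
Require Import Defs.
From HB Require Import structures.
From mathcomp Require Import all_boot all_order all_algebra.
From mathcomp Require Import ring lra.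
Import Order.TTheory GRing.Theory Num.Theory.
Local Open Scope ring_scope.

Section Aux.
Variables (R : realFieldType) (N : nat).
Variables (p c r : 'I_N -> R) (beta eps : R).

Lemma bigmin_le (T : eqType) (x0 : R) (F : T -> R) (s : seq T) a :
  a \in s -> \big[Order.min/x0]_(i <- s) F i <= F a.
Proof.
elim: s => [//|i s IH]; rewrite inE big_cons => /orP [/eqP -> | Ha].
  by rewrite ge_min lexx.
by rewrite ge_min IH // orbT.
Qed.

Lemma le_bigmin_all (T : Type) (x x0 : R) (F : T -> R) (s : seq T) :
  x <= x0 -> (forall i, x <= F i) -> x <= \big[Order.min/x0]_(i <- s) F i.
Proof.
move=> h0 hF; apply: (big_ind (fun y => x <= y)) => //.
by move=> y z hy hz; rewrite le_min hy hz.
Qed.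

Lemma minbr_le M V s a : minbracket p c r beta eps M V s <= bracket p c r beta eps M V s a.
Proof. by apply: bigmin_le; rewrite mem_index_enum. Qed.

Lemma Qa_le1 a : (0 <= 1 - Qa p r a) ->  True. Proof. by []. Qed.

Hypothesis Hp : forall n, 0 < p n <= 1.
Hypothesis Hr : forall n, 0 < r n <= 1.

Lemma oneQ_ge0 a : 0 <= 1 - Qa p r a.
Proof.
rewrite /Qa opprB addrC subrK; apply: prodr_ge0 => n _.
have /andP [p0 p1] := Hp n; have /andP [r0 r1] := Hr n.
rewrite subr_ge0; have -> : (1 : R) = 1 * 1 by rewrite mulr1.
by apply: ler_pM => //; apply: ltW.
Qed.

Lemma bracketE M V s a : bracket p c r beta eps M V s a =
  (1 - beta) * Ea p c a + beta * eps * (1 - Qa p r a) * (s%:R ^+ 2 + 2 * s%:R)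
  + beta * eps + Qa p r a * V 1%N + (1 - Qa p r a) * V (minn s.+1 M).
Proof. rewrite /bracket /ucost; ring. Qed.

Hypothesis Hbeta : 0 < beta < 1.
Hypothesis Heps : 0 < eps.

Lemma X_le (s t : nat) : (s <= t)%N -> s%:R ^+ 2 + 2 * s%:R <= t%:R ^+ 2 + 2 * t%:R :> R.
Proof.
move=> h; have h1 : s%:R <= t%:R :> R by rewrite ler_nat.
have h0 : 0 <= s%:R :> R by rewrite ler0n.
nra.
Qed.

Lemma X_lt (s t : nat) : (s < t)%N -> s%:R ^+ 2 + 2 * s%:R < t%:R ^+ 2 + 2 * t%:R :> R.
Proof.
move=> h; have h1 : s%:R < t%:R :> R by rewrite ltr_nat.
have h0 : 0 <= s%:R :> R by rewrite ler0n.
nra.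
Qed.

Lemma bracket_mono M (V : nat -> R) (s t : nat) a :
  (forall x y, (x <= y)%N -> V x <= V y) -> (s <= t)%N ->
  bracket p c r beta eps M V s a <= bracket p c r beta eps M V t a.
Proof.
move=> hV hst; rewrite !bracketE -subr_ge0.
set q := Qa p r a.
have hq : 0 <= 1 - q by apply: oneQ_ge0.
have hX := @X_le s t hst.
have hV' : V (minn s.+1 M) <= V (minn t.+1 M).
  by apply: hV; rewrite leq_min !geq_min ltnS hst leqnn /= orbT.
have hbe : 0 <= beta * eps.
  by case/andP: Hbeta => b0 _; apply: mulr_ge0; apply: ltW.
set Xs := (_ + 2 * s%:R); set Xt := (_ + 2 * t%:R).
have -> : (1 - beta) * Ea p c a + beta * eps * (1 - q) * Xt + beta * eps +
  q * V 1%N + (1 - q) * V (minn t.+1 M) -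
  ((1 - beta) * Ea p c a + beta * eps * (1 - q) * Xs + beta * eps +
  q * V 1%N + (1 - q) * V (minn s.+1 M)) =
  (1 - q) * (beta * eps * (Xt - Xs) + (V (minn t.+1 M) - V (minn s.+1 M))) by ring.
apply: mulr_ge0 => //; apply: addr_ge0; last by rewrite subr_ge0.
by apply: mulr_ge0 => //; rewrite subr_ge0.
Qed.

Lemma RVI_mono M v (s t : nat) : (s <= t)%N ->
  RVI p c r beta eps M v s <= RVI p c r beta eps M v t.
Proof.
elim: v s t => [|v IH] s t hst /=; first by [].
rewrite lerD2r; apply: le_bigmin_all.
  apply: le_trans (minbr_le _ _ _ set0) _.
  exact: bracket_mono.
move=> a; apply: le_trans (minbr_le _ _ _ a) _.
exact: bracket_mono.
Qed.

Lemma main_ineq M v s1 s2 a1 a2 : (s1 < s2)%N ->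
  (forall b, bracket p c r beta eps M (RVI p c r beta eps M v) s1 a1 <=
             bracket p c r beta eps M (RVI p c r beta eps M v) s1 b) ->
  (forall b, bracket p c r beta eps M (RVI p c r beta eps M v) s2 a2 <=
             bracket p c r beta eps M (RVI p c r beta eps M v) s2 b) ->
  Qa p r a1 <= Qa p r a2.
Proof.
move=> hlt h1 h2; have := h1 a2; have := h2 a1.
set V := RVI p c r beta eps M v.
rewrite !bracketE.
have hX := @X_lt s1 s2 hlt.
have hV' : V (minn s1.+1 M) <= V (minn s2.+1 M).
  apply: RVI_mono; rewrite leq_min !geq_min ltnS (ltnW hlt) leqnn /= orbT //.
have hbe : 0 < beta * eps.
  by case/andP: Hbeta => b0 _; apply: mulr_gt0.
set q1 := Qa p r a1; set q2 := Qa p r a2.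
set X1 := (_ + 2 * s1%:R); set X2 := (_ + 2 * s2%:R).
set E1 := Ea p c a1; set E2 := Ea p c a2.
set W1 := V (minn s1.+1 M); set W2 := V (minn s2.+1 M).
move=> i2 i1.
have hD : 0 < beta * eps * (X2 - X1) + (W2 - W1).
  apply: ltr_pwDl; last by rewrite subr_ge0.
  by apply: mulr_gt0 => //; rewrite subr_gt0.
have key : (q1 - q2) * (beta * eps * (X2 - X1) + (W2 - W1)) <= 0.
  set D := (beta * eps * (X2 - X1) + (W2 - W1)).
  have -> : (q1 - q2) * D =
    ((1 - beta) * E2 + beta * eps * (1 - q2) * X2 + beta * eps + q2 * V 1%N + (1 - q2) * W2
     - ((1 - beta) * E2 + beta * eps * (1 - q2) * X1 + beta * eps + q2 * V 1%N + (1 - q2) * W1))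
    - ((1 - beta) * E1 + beta * eps * (1 - q1) * X2 + beta * eps + q1 * V 1%N + (1 - q1) * W2
     - ((1 - beta) * E1 + beta * eps * (1 - q1) * X1 + beta * eps + q1 * V 1%N + (1 - q1) * W1))
    by rewrite /D; ring.
  lra.
rewrite -subr_le0; move: key; rewrite pmulr_lle0 //.
Qed.

End Aux.

Theorem lemma3 (R : realFieldType) (N : nat) (p c r : 'I_N -> R) (beta eps : R)
  (HN : (0 < N)%N)
  (Hp : forall n, 0 < p n <= 1) (Hc : forall n, 0 <= c n)
  (Hr : forall n, 0 < r n <= 1)
  (Hbeta : 0 < beta < 1) (Heps : 0 < eps)
  (M : nat) (HM : (0 < M)%N)
  (phi : nat -> nat -> {set 'I_N})
  (Hphi : forall v s, (1 <= s <= M)%N ->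
            is_minimizer p c r beta eps M v s (phi v s)) :
  forall (v s1 s2 : nat), (1 <= s1)%N -> (s1 < s2)%N -> (s2 <= M)%N ->
    Qa p r (phi v s1) <= Qa p r (phi v s2).
Proof.
move=> v s1 s2 h1 h12 h2.
apply: (@main_ineq R N p c r beta eps Hp Hr Hbeta Heps M v s1 s2 _ _ h12).
  by apply: Hphi; rewrite h1 (leq_trans (ltnW h12) h2).
by apply: Hphi; rewrite h2 andbT (leq_trans h1 (ltnW h12)).
Qed.
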